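(* For $p=(x,y)\in\mathbb{R}^2_{x<y}:=\{(x,y)\in\mathbb{R}^2\mid x<y\}$ set $\lambda(p):=\dfrac{y-x}{2\|(1,x,y)\|_2}$. For every $K>0$ and every $\alpha\ge 1$, the functions \[ \widetilde{\omega}(p)=\lambda(p)^\alpha,\qquad \omega_K(p)=\frac{2}{\pi}\arctan\!\left(\frac{\lambda(p)^\alpha}{K^\alpha}\right) \] are stable weightings. Moreover, for $\alpha=1$ both $\widetilde{\omega}$ and $\omega_K$ are effective weightings.
   Context: Notation: for $p=(x,y)\in\mathbb{R}^2$ write $(1,p):=(1,x,y)\in\mathbb{R}^3$; $\Delta:=\{(x,y)\mid x=y\}$ and $\|p-\Delta\|_\infty=\frac{y-x}{2}$ for $p\in\mathbb{R}^2_{x<y}$. $B_r=\{p\in\mathbb{R}^2:\|p\|_2\le r\}$, $B_r^c=\mathbb{R}^2\setminus B_r$. A persistence diagram (PD) is a measure $\mu_D=\sum_{p\in D}c_p\delta_p$ with $D\subset\mathbb{R}^2_{x<y}$ finite and $c_p\in\mathbb{N}$. For a measure $\mu$ and $Z\subset\mathbb{R}^2$, $\mathrm{pers}_Z(\mu)=\frac12\int_Z(y-x)\,d\mu((x,y))$. For a weighting $\omega$ (a function with values in $(0,1]$ on the points of diagrams), set $\Gamma_\omega(p):=\omega(p)(1,p)\in\mathbb{R}^3$. A stable weighting is a function $\omega$ with values in $(0,1]$ such that (i) $\Gamma_\omega$ is $C$-Lipschitz (Euclidean norms) for some $C>0$, and (ii) there is $C'>0$ with $\|\Gamma_\omega(p)\|_2\le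 C'\frac{y-x}{2}=C'\|p-\Delta\|_\infty$ for every $p=(x,y)\in\mathbb{R}^2_{x<y}$. An effective weighting is a function $\omega$ with values in $(0,1]$ such that for every sequence of PDs $\{\mu_{D_n}\}_{n\in\mathbb{N}}$: if $\lim_{r\to\infty}\sup_n\int_{B_r^c}\omega(p)\|p\|_2\,d\mu_{D_n}(p)=0$, then $\lim_{r\to\infty}\sup_n\mathrm{pers}_{B_r^c}(\mu_{D_n})=0$. *)

(* Defs.v *)
From Stdlib Require Import Reals Lra List.
Open Scope R_scope.

Definition pt := (R * R)%type.

Definition norm2 (p : pt) : R := sqrt (fst p ^ 2 + snd p ^ 2).
Definition norm3 (a b c : R) : R := sqrt (a ^ 2 + b ^ 2 + c ^ 2).

Definition lam (p : pt) : R := (snd p - fst p) / (2 * norm3 1 (fst p) (snd p)).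

Definition omega_tilde (alpha : R) (p : pt) : R := Rpower (lam p) alpha.
Definition omega_K (K alpha : R) (p : pt) : R :=
  2 / PI * atan (Rpower (lam p) alpha / Rpower K alpha).

(* Upper half plane R^2_{x<y}: the points of persistence diagrams. *)
Definition upper (p : pt) : Prop := fst p < snd p.

Definition is_weighting (w : pt -> R) : Prop :=
  forall p, upper p -> 0 < w p <= 1.

(* ||Gamma_w(p) - Gamma_w(q)||_2 where Gamma_w(p) = w(p) (1, x, y). *)
Definition Gamma_dist (w : pt -> R) (p q : pt) : R :=
  norm3 (w p - w q) (w p * fst p - w q * fst q) (w p * snd p - w q * snd q).
Definition Gamma_norm (w : pt -> R) (p : pt) : R :=
  norm3 (w p) (w p * fst p) (w p * snd p).

Definition stable_weighting (w : pt -> R) : Prop :=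
  is_weighting w /\
  (exists C, 0 < C /\ forall p q, upper p -> upper q ->
      Gamma_dist w p q <= C * norm2 (fst p - fst q, snd p - snd q)) /\
  (exists C', 0 < C' /\ forall p, upper p ->
      Gamma_norm w p <= C' * ((snd p - fst p) / 2)).

(* A persistence diagram mu_D = sum_{p in D} c_p delta_p, represented as a
   finite list of points of R^2_{x<y}, each point repeated c_p times. *)
Definition is_PD (D : list pt) : Prop := Forall upper D.

(* int_{B_r^c} f d mu_D, where B_r^c = {p : ||p||_2 > r}. *)
Fixpoint int_out (D : list pt) (r : R) (f : pt -> R) : R :=
  match D with
  | nil => 0
  | p :: D' => (if Rlt_dec r (norm2 p) then f p else 0) + int_out D' r f
  end.

Definition pers_out (D : list pt) (r : R) : R :=
  / 2 * int_out D r (fun p => snd p - fst p).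

(* lim_{r -> oo} sup_n F n r = 0, for nonnegative F (sup in [0, +oo]):
   written out, for every eps > 0, eventually in r, every F n r <= eps. *)
Definition lim_sup_zero (F : nat -> R -> R) : Prop :=
  forall eps, 0 < eps -> exists R0, forall r, R0 <= r -> forall n, F n r <= eps.

Definition effective_weighting (w : pt -> R) : Prop :=
  is_weighting w /\
  forall D : nat -> list pt, (forall n, is_PD (D n)) ->
    lim_sup_zero (fun n r => int_out (D n) r (fun p => w p * norm2 p)) ->
    lim_sup_zero (fun n r => pers_out (D n) r).

(* Main.v *)
Require Import Defs.
From Stdlib Require Import Reals.
From Stdlib Require Import Lra Psatz List.
Open Scope R_scope.

Lemma exp_le' x y : x <= y -> exp x <= exp y.
Proof. intros [H|H]; [left; apply exp_increasing; auto| subst; lra]. Qed.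

Lemma ln_nonpos s : 0 < s <= 1 -> ln s <= 0.
Proof.
  intros [H0 [H1|H1]]. left; rewrite <- ln_1; apply ln_increasing; lra.
  subst; rewrite ln_1; lra.
Qed.

Lemma Rabs_bounds a b : Rabs a <= b -> - b <= a <= b.
Proof. unfold Rabs; destruct (Rcase_abs a); lra. Qed.

Lemma sqrt_le_M S M : 0 <= M -> S <= M ^ 2 -> sqrt S <= M.
Proof. intros HM HS. rewrite <- (sqrt_pow2 M HM). apply sqrt_le_1_alt; auto. Qed.

Lemma norm3_nonneg a b c : 0 <= norm3 a b c.
Proof. apply sqrt_pos. Qed.

Lemma norm3_sq a b c : norm3 a b c ^ 2 = a^2+b^2+c^2.
Proof. unfold norm3; apply pow2_sqrt; nra. Qed.

Lemma norm3_le a b c M : 0 <= M -> a^2+b^2+c^2 <= M^2 -> norm3 a b c <= M.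
Proof. intros; unfold norm3; apply sqrt_le_M; auto. Qed.

Lemma norm3_tri a1 b1 c1 a2 b2 c2 :
  norm3 (a1+a2) (b1+b2) (c1+c2) <= norm3 a1 b1 c1 + norm3 a2 b2 c2.
Proof.
  pose proof (norm3_nonneg a1 b1 c1) as H1.
  pose proof (norm3_nonneg a2 b2 c2) as H2.
  pose proof (norm3_sq a1 b1 c1) as S1.
  pose proof (norm3_sq a2 b2 c2) as S2.
  set (n1 := norm3 a1 b1 c1) in *. set (n2 := norm3 a2 b2 c2) in *.
  apply norm3_le; [lra|].
  assert (CS : (a1*a2+b1*b2+c1*c2)^2 <= (n1*n2)^2).
  { replace ((n1*n2)^2) with (n1^2*n2^2) by ring. rewrite S1, S2.
    assert (0 <= (a1*b2-a2*b1)^2 + (a1*c2-a2*c1)^2 + (b1*c2-b2*c1)^2) by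
      (apply Rplus_le_le_0_compat; [apply Rplus_le_le_0_compat|]; apply pow2_ge_0).
    assert (I : (a1^2+b1^2+c1^2)*(a2^2+b2^2+c2^2) = (a1*a2+b1*b2+c1*c2)^2 +
      ((a1*b2-a2*b1)^2 + (a1*c2-a2*c1)^2 + (b1*c2-b2*c1)^2)) by ring.
    lra. }
  assert (D : a1*a2+b1*b2+c1*c2 <= n1*n2).
  { destruct (Rle_or_lt (a1*a2+b1*b2+c1*c2) (n1*n2)) as [h|h]; auto.
    assert (0 <= n1*n2) by nra. nra. }
  replace ((n1+n2)^2) with (n1^2+n2^2+2*(n1*n2)) by ring. rewrite S1, S2. nra.
Qed.

Lemma norm3_scale s a b c : norm3 (s*a) (s*b) (s*c) <= Rabs s * norm3 a b c.
Proof.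
  apply norm3_le. apply Rmult_le_pos; [apply Rabs_pos|apply norm3_nonneg].
  replace ((Rabs s * norm3 a b c)^2) with (Rabs s ^2 * norm3 a b c ^2) by ring.
  rewrite pow2_abs, norm3_sq. nra.
Qed.

Lemma lip_deriv f f' L a b :
  (forall c, Rmin a b <= c <= Rmax a b -> derivable_pt_lim f c (f' c) /\ Rabs (f' c) <= L) ->
  Rabs (f b - f a) <= L * Rabs (b - a).
Proof.
  intros H.
  assert (G : forall u v, u < v -> (forall c, u <= c <= v -> derivable_pt_lim f c (f' c) /\ Rabs (f' c) <= L) ->
     Rabs (f v - f u) <= L * Rabs (v - u)).
  { intros u v huv Hd. destruct (MVT_cor2 f f' u v huv) as [c [E Hc]].
    { intros c Hc; apply Hd; auto. }
    rewrite E, Rabs_mult. apply Rmult_le_compat_r; [apply Rabs_pos|]. apply Hd; lra. }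
  destruct (Rtotal_order a b) as [h|[h|h]].
  - apply G; auto. intros c Hc; apply H. rewrite Rmin_left, Rmax_right; lra.
  - subst. replace (f b - f b) with 0 by ring. replace (b - b) with 0 by ring.
    rewrite Rabs_R0. assert (0 <= L). { destruct (H b) as [_ h].
      rewrite Rmin_left, Rmax_left; lra. pose proof (Rabs_pos (f' b)); lra. } lra.
  - rewrite Rabs_minus_sym, (Rabs_minus_sym b). apply G; auto.
    intros c Hc; apply H. rewrite Rmin_right, Rmax_left; lra.
Qed.

Lemma rpow_lip al a b : 1 <= al -> 0 < a <= 1 -> 0 < b <= 1 ->
  Rabs (Rpower a al - Rpower b al) <= al * Rabs (a - b).
Proof.
  intros Hal Ha Hb. rewrite Rabs_minus_sym, (Rabs_minus_sym a).
  apply (lip_deriv (fun x => Rpower x al) (fun x => al * Rpower x (al - 1))).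
  intros c Hc. assert (0 < c /\ c <= 1).
  { split. eapply Rlt_le_trans; [|apply Hc]. apply Rmin_glb_lt; lra.
    eapply Rle_trans; [apply Hc|]. apply Rmax_lub; lra. }
  split. apply derivable_pt_lim_power; lra.
  rewrite Rabs_pos_eq. 2:{ unfold Rpower; pose proof (exp_pos ((al-1) * ln c)); apply Rmult_le_pos; lra. }
  assert (Rpower c (al - 1) <= 1).
  { unfold Rpower. apply Rle_trans with (exp 0); [|rewrite exp_0; lra]. apply exp_le'. assert (ln c <= 0) by (apply ln_nonpos; lra). nra. }
  nra.
Qed.

Lemma rpow_le_self al s : 1 <= al -> 0 < s <= 1 -> Rpower s al <= s.
Proof.
  intros. unfold Rpower. rewrite <- (exp_ln s) at 2 by lra. apply exp_le'.
  assert (ln s <= 0) by (apply ln_nonpos; lra). nra.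
Qed.

Lemma atan_lip a b : Rabs (atan a - atan b) <= Rabs (a - b).
Proof.
  rewrite Rabs_minus_sym, (Rabs_minus_sym a).
  rewrite <- (Rmult_1_l (Rabs (b - a))).
  apply (lip_deriv atan (fun x => / (1 + x^2))).
  intros c _. split. apply derivable_pt_lim_atan.
  assert (1 <= 1 + c^2) by nra.
  rewrite Rabs_pos_eq. rewrite <- Rinv_1. apply Rinv_le_contravar; lra.
  left; apply Rinv_0_lt_compat; lra.
Qed.

Lemma atan_pos t : 0 < t -> 0 < atan t.
Proof. intros; rewrite <- atan_0; apply atan_increasing; auto. Qed.

Lemma N_pos x y : 0 < norm3 1 x y.
Proof. unfold norm3; apply sqrt_lt_R0; nra. Qed.

Lemma lam_bounds p : upper p -> 0 < lam p < 1.
Proof.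
  destruct p as [x y]; unfold upper, lam; simpl; intros H.
  pose proof (N_pos x y). pose proof (norm3_sq 1 x y).
  set (N := norm3 1 x y) in *. split.
  apply Rdiv_lt_0_compat; lra.
  apply (Rmult_lt_reg_r (2*N)); [lra|]. unfold Rdiv. rewrite Rmult_assoc, Rinv_l by lra.
  assert (Q : (y-x)^2 < (2*N)^2).
  { replace ((2*N)^2) with (4 * N^2) by ring. rewrite H1. nra. }
  destruct (Rlt_or_le (y-x) (2*N)) as [h|h]; [lra|].
  assert ((2*N)*(2*N) <= (y-x)*(y-x)) by (apply Rmult_le_compat; lra). nra.
Qed.

Lemma lam_N p : lam p * norm3 1 (fst p) (snd p) = (snd p - fst p) / 2.
Proof.
  destruct p as [x y]; unfold lam; simpl. pose proof (N_pos x y). field. lra.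
Qed.

Lemma lam_diff p q : upper p -> upper q ->
  norm3 1 (fst q) (snd q) <= norm3 1 (fst p) (snd p) ->
  Rabs (lam p - lam q) * norm3 1 (fst q) (snd q) <= 2 * norm2 (fst p - fst q, snd p - snd q).
Proof.
  intros Hp Hq HN.
  pose proof (lam_bounds p Hp). pose proof (lam_N p). pose proof (lam_N q).
  destruct p as [xp yp]; destruct q as [xq yq]; simpl in *.
  set (dx := xp - xq). set (dy := yp - yq).
  assert (HD : norm2 (dx, dy) = norm3 0 dx dy).
  { unfold norm2, norm3; simpl. f_equal; ring. }
  rewrite HD.
  pose proof (norm3_nonneg 0 dx dy). pose proof (norm3_sq 0 dx dy).
  assert (T1 : norm3 1 xp yp <= norm3 1 xq yq + norm3 0 dx dy).
  { replace xp with (xq + dx) at 1 by (unfold dx; ring).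
    replace yp with (yq + dy) at 1 by (unfold dy; ring).
    rewrite <- (Rplus_0_r 1) at 1. apply norm3_tri. }
  set (D := norm3 0 dx dy) in *.
  set (Np := norm3 1 xp yp) in *. set (Nq := norm3 1 xq yq) in *.
  pose proof (N_pos xq yq). fold Nq in H4.
  assert (Hdx : - D <= dx <= D) by (split; nra).
  assert (Hdy : - D <= dy <= D) by (split; nra).
  assert (E : (lam (xp,yp) - lam (xq,yq)) * Nq = (dy - dx)/2 + lam (xp,yp) * (Nq - Np)).
  { unfold dx, dy. nra. }
  rewrite <- (Rabs_pos_eq Nq) by lra. rewrite <- Rabs_mult, E.
  apply Rabs_le. split; nra.
Qed.

Lemma norm2_sym a b c d : norm2 (a - b, c - d) = norm2 (b - a, d - c).
Proof. unfold norm2; simpl; f_equal; ring. Qed.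

Lemma Gamma_dist_sym w p q : Gamma_dist w p q = Gamma_dist w q p.
Proof. unfold Gamma_dist, norm3; f_equal; ring. Qed.

Lemma stable_of (g : R -> R) L C' : 0 <= L -> 0 < C' ->
  (forall s, 0 < s < 1 -> 0 < g s <= 1) ->
  (forall a b, 0 < a < 1 -> 0 < b < 1 -> Rabs (g a - g b) <= L * Rabs (a - b)) ->
  (forall s, 0 < s < 1 -> g s <= C' * s) ->
  stable_weighting (fun p => g (lam p)).
Proof.
  intros HL HC Hg Hlip Hup. split; [|split].
  - intros p Hp. apply Hg, lam_bounds, Hp.
  - exists (1 + 2 * L). split; [lra|].
    assert (Main : forall p q, upper p -> upper q ->
       norm3 1 (fst q) (snd q) <= norm3 1 (fst p) (snd p) ->
       Gamma_dist (fun p => g (lam p)) p q <= (1 + 2 * L) * norm2 (fst p - fst q, snd p - snd q)).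
    { intros p q Hp Hq HN.
      pose proof (lam_diff p q Hp Hq HN) as Hl.
      pose proof (lam_bounds p Hp). pose proof (lam_bounds q Hq).
      pose proof (Hg _ (lam_bounds p Hp)). pose proof (Hlip _ _ (lam_bounds p Hp) (lam_bounds q Hq)).
      destruct p as [xp yp]; destruct q as [xq yq]; simpl in *.
      set (wp := g (lam (xp,yp))) in *. set (wq := g (lam (xq,yq))) in *.
      unfold Gamma_dist; simpl. fold wp wq.
      replace (wp - wq) with (wp * 0 + (wp - wq) * 1) by ring.
      replace (wp * xp - wq * xq) with (wp * (xp - xq) + (wp - wq) * xq) by ring.
      replace (wp * yp - wq * yq) with (wp * (yp - yq) + (wp - wq) * yq) by ring.
      eapply Rle_trans; [apply norm3_tri|].
      pose proof (norm3_scale wp 0 (xp - xq) (yp - yq)) as S1.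
      pose proof (norm3_scale (wp - wq) 1 xq yq) as S2.
      assert (E : norm3 0 (xp - xq) (yp - yq) = norm2 (xp - xq, yp - yq)).
      { unfold norm2, norm3; simpl; f_equal; ring. }
      rewrite E in S1. rewrite Rabs_pos_eq in S1 by lra.
      pose proof (norm3_nonneg 0 (xp-xq) (yp-yq)) as S3. rewrite E in S3.
      set (D := norm2 (xp - xq, yp - yq)) in *.
      set (Nq := norm3 1 xq yq) in *.
      assert (0 < Nq) by apply N_pos.
      assert (Rabs (wp - wq) * Nq <= L * (Rabs (lam (xp, yp) - lam (xq, yq)) * Nq)).
      { rewrite <- Rmult_assoc. apply Rmult_le_compat_r; lra. }
      assert (wp * D <= D) by nra.
      nra. }
    intros p q Hp Hq.
    destruct (Rle_or_lt (norm3 1 (fst q) (snd q)) (norm3 1 (fst p) (snd p))) as [h|h].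
    + apply Main; auto.
    + rewrite Gamma_dist_sym. destruct p, q; simpl. rewrite norm2_sym.
      apply (Main (r1, r2) (r, r0)); simpl in *; auto; lra.
  - exists C'. split; auto. intros p Hp.
    pose proof (lam_bounds p Hp). pose proof (Hg _ H). pose proof (Hup _ H).
    pose proof (lam_N p). unfold Gamma_norm.
    rewrite <- (Rmult_1_r (g (lam p))) at 1.
    eapply Rle_trans; [apply norm3_scale|]. rewrite Rabs_pos_eq by lra.
    pose proof (N_pos (fst p) (snd p)).
    rewrite <- H2.
    assert (g (lam p) * norm3 1 (fst p) (snd p) <= C' * lam p * norm3 1 (fst p) (snd p)).
    { apply Rmult_le_compat_r; lra. } lra.
Qed.
Lemma int_le D r f g c : Forall upper D -> 1 <= r ->
  (forall p, upper p -> 1 <= norm2 p -> f p <= c * g p) ->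
  int_out D r f <= c * int_out D r g.
Proof.
  intros HD Hr H. induction HD as [|p D' Hp HD' IH]; simpl.
  - lra.
  - rewrite Rmult_plus_distr_l. apply Rplus_le_compat; auto.
    destruct (Rlt_dec r (norm2 p)). apply H; auto; lra. lra.
Qed.

Lemma effective_of w c : 0 < c -> is_weighting w ->
  (forall p, upper p -> 1 <= norm2 p -> snd p - fst p <= c * (w p * norm2 p)) ->
  effective_weighting w.
Proof.
  intros Hc Hw H. split; auto. intros D HD Hlim eps Heps.
  destruct (Hlim (2 * eps / c)) as [R0 HR0].
  { apply Rdiv_lt_0_compat; lra. }
  exists (Rmax R0 1). intros r Hr n. unfold pers_out.
  assert (r1 : 1 <= r) by (eapply Rle_trans; [apply Rmax_r|exact Hr]).
  assert (r0 : R0 <= r) by (eapply Rle_trans; [apply Rmax_l|exact Hr]).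
  pose proof (int_le (D n) r (fun p => snd p - fst p) (fun p => w p * norm2 p) c (HD n) r1 H) as I1.
  pose proof (HR0 r r0 n) as I2. simpl in I2.
  assert (c * int_out (D n) r (fun p => w p * norm2 p) <= c * (2 * eps / c)).
  { apply Rmult_le_compat_l; lra. }
  replace (c * (2 * eps / c)) with (2 * eps) in H0 by (field; lra). lra.
Qed.

Lemma norm2_sq p : norm2 p ^ 2 = fst p ^ 2 + snd p ^ 2.
Proof. unfold norm2; apply pow2_sqrt; nra. Qed.

Lemma lam_norm p : upper p -> 1 <= norm2 p -> snd p - fst p <= 4 * (lam p * norm2 p).
Proof.
  intros Hp H1. pose proof (lam_bounds p Hp). pose proof (lam_N p).
  pose proof (norm2_sq p).
  assert (HN : norm3 1 (fst p) (snd p) <= 2 * norm2 p).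
  { apply norm3_le; [lra|]. nra. }
  assert (lam p * (2 * norm2 p - norm3 1 (fst p) (snd p)) >= 0) by nra.
  nra.
Qed.

Lemma atan_lower t : 0 < t -> t / (1 + t) <= atan t.
Proof.
  intros Ht. pose proof (sin_lt_x (atan t) (atan_pos t Ht)). rewrite sin_atan in H.
  assert (sqrt (1 + t²) <= 1 + t).
  { apply sqrt_le_M; [lra|]. unfold Rsqr. nra. }
  assert (0 < sqrt (1 + t²)) by (apply sqrt_lt_R0; unfold Rsqr; nra).
  assert (t / (1 + t) <= t / sqrt (1 + t²)).
  { unfold Rdiv. apply Rmult_le_compat_l; [lra|]. apply Rinv_le_contravar; lra. }
  lra.
Qed.

Theorem mainTheorem1 :
  forall K alpha : R, 0 < K -> 1 <= alpha ->
    stable_weighting (omega_tilde alpha) /\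
    stable_weighting (omega_K K alpha) /\
    (alpha = 1 ->
       effective_weighting (omega_tilde alpha) /\
       effective_weighting (omega_K K alpha)).
Proof.
  intros K al HK Hal.
  assert (PIp := PI_RGT_0).
  assert (KA : 0 < Rpower K al) by apply exp_pos.
  assert (Sw1 : stable_weighting (omega_tilde al)).
  { apply (stable_of (fun s => Rpower s al) al 1); try lra.
    - intros s Hs. split. apply exp_pos. pose proof (rpow_le_self al s Hal). lra.
    - intros a b Ha Hb. apply rpow_lip; lra.
    - intros s Hs. pose proof (rpow_le_self al s Hal). lra. }
  assert (Sw2 : stable_weighting (omega_K K al)).
  { apply (stable_of (fun s => 2 / PI * atan (Rpower s al / Rpower K al))
             (2 / PI * al / Rpower K al) (2 / PI / Rpower K al)).
    - apply Rmult_le_pos; [|left; apply Rinv_0_lt_compat; lra].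
      apply Rmult_le_pos; [|lra]. left; apply Rdiv_lt_0_compat; lra.
    - apply Rdiv_lt_0_compat; [apply Rdiv_lt_0_compat|]; lra.
    - intros s Hs. assert (0 < Rpower s al / Rpower K al).
      { apply Rdiv_lt_0_compat; [apply exp_pos|lra]. }
      pose proof (atan_pos _ H). pose proof (atan_bound (Rpower s al / Rpower K al)).
      split. apply Rmult_lt_0_compat; [apply Rdiv_lt_0_compat|]; lra.
      apply (Rmult_le_reg_l (PI/2)); [lra|]. unfold Rdiv.
      replace (PI * / 2 * (2 * / PI * atan (Rpower s al * / Rpower K al))) with
        (atan (Rpower s al * / Rpower K al)) by (field; lra). lra.
    - intros a b Ha Hb.
      replace (2 / PI * atan (Rpower a al / Rpower K al) - 2 / PI * atan (Rpower b al / Rpower K al))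
        with (2 / PI * (atan (Rpower a al / Rpower K al) - atan (Rpower b al / Rpower K al))) by ring.
      rewrite Rabs_mult, (Rabs_pos_eq (2/PI)) by (left; apply Rdiv_lt_0_compat; lra).
      pose proof (atan_lip (Rpower a al / Rpower K al) (Rpower b al / Rpower K al)) as A.
      replace (Rpower a al / Rpower K al - Rpower b al / Rpower K al) with
        ((Rpower a al - Rpower b al) * / Rpower K al) in A by (field; lra).
      rewrite Rabs_mult, (Rabs_pos_eq (/ Rpower K al)) in A by (left; apply Rinv_0_lt_compat; lra).
      pose proof (rpow_lip al a b Hal ltac:(lra) ltac:(lra)) as B.
      assert (0 < / Rpower K al) by (apply Rinv_0_lt_compat; lra).
      assert (0 < 2 / PI) by (apply Rdiv_lt_0_compat; lra).
      assert (Rabs (Rpower a al - Rpower b al) * / Rpower K al <= al * Rabs (a - b) * / Rpower K al)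
        by (apply Rmult_le_compat_r; lra).
      assert (2 / PI * Rabs (atan (Rpower a al / Rpower K al) - atan (Rpower b al / Rpower K al))
              <= 2 / PI * (al * Rabs (a - b) * / Rpower K al)) by (apply Rmult_le_compat_l; lra).
      replace (2 / PI * al / Rpower K al * Rabs (a - b)) with (2 / PI * (al * Rabs (a - b) * / Rpower K al)) by (field; lra).
      exact H2.
    - intros s Hs. pose proof (rpow_le_self al s Hal ltac:(lra)).
      assert (0 < Rpower s al / Rpower K al) by (apply Rdiv_lt_0_compat; [apply exp_pos|lra]).
      pose proof (atan_lip (Rpower s al / Rpower K al) 0) as A.
      rewrite atan_0, !Rminus_0_r, !Rabs_pos_eq in A; try lra.
      2:{ left; apply atan_pos; lra. }
      assert (0 < 2 / PI) by (apply Rdiv_lt_0_compat; lra).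
      assert (Rpower s al / Rpower K al <= s / Rpower K al).
      { unfold Rdiv; apply Rmult_le_compat_r; [left; apply Rinv_0_lt_compat|]; lra. }
      assert (2 / PI * atan (Rpower s al / Rpower K al) <= 2 / PI * (s / Rpower K al))
        by (apply Rmult_le_compat_l; lra).
      replace (2 / PI / Rpower K al * s) with (2 / PI * (s / Rpower K al)) by (field; lra).
      exact H3. }
  split; [exact Sw1|split; [exact Sw2|]].
  intros ->. split.
  - apply (effective_of _ 4); [lra| apply Sw1|].
    intros p Hp H1. unfold omega_tilde. rewrite Rpower_1 by (apply lam_bounds; auto).
    apply lam_norm; auto.
  - apply (effective_of _ (2 * PI * (K + 1))); [nra| apply Sw2|].
    intros p Hp H1. unfold omega_K. pose proof (lam_bounds p Hp).
    rewrite !Rpower_1 by lra.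
    pose proof (lam_norm p Hp H1).
    assert (0 < lam p / K) by (apply Rdiv_lt_0_compat; lra).
    pose proof (atan_lower _ H2).
    assert (lam p / (K + 1) <= lam p / K / (1 + lam p / K)).
    { replace (lam p / K / (1 + lam p / K)) with (lam p / (K + lam p)) by (field; lra).
      unfold Rdiv. apply Rmult_le_compat_l; [lra|]. apply Rinv_le_contravar; lra. }
    assert (lam p <= PI * (K + 1) / 2 * (2 / PI * atan (lam p / K))).
    { replace (PI * (K + 1) / 2 * (2 / PI * atan (lam p / K))) with ((K + 1) * atan (lam p / K))
        by (field; lra).
      assert (lam p = (K + 1) * (lam p / (K + 1))) by (field; lra). nra. }
    pose proof (norm2_sq p). assert (0 <= norm2 p) by (unfold norm2; apply sqrt_pos).
    nra.
Qed.
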